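(* Let $G_A$ be as in the context, let $p\ne q\in\mathbb{R}^n\cong\partial G_A\setminus\{\xi_0\}$ and suppose $D_e(p,q)=e^{t_0}$. Let $t_1,t_2\in\mathbb{R}$ and let $d$ be the Riemannian distance on $G_A$. Then: (1) if $t_1,t_2<t_0$, then $|d((p,t_1),(q,t_2))-(t_0-t_1)-(t_0-t_2)|\le C$, where $C$ depends only on $\alpha_1$ and $\alpha_r$; (2) if $t_1\ge t_0$ or $t_2\ge t_0$, then $|t_1-t_2|\le d((p,t_1),(q,t_2))\le|t_1-t_2|+1$.
   Context: Let $n_1,\dots,n_r\ge1$, $n=\sum n_i$, $0<\alpha_1<\dots<\alpha_r$, $A=\mathrm{diag}(\alpha_1I_{n_1},\dots,\alpha_rI_{n_r})$. $G_A$ is $\mathbb{R}^n\times\mathbb{R}$ with product $(x,t)(y,s)=(x+e^{tA}y,t+s)$ and the left-invariant Riemannian metric which at $(x,t)$ is $\begin{pmatrix}e^{-2tA}&0\\0&1\end{pmatrix}$; it is Gromov hyperbolic with ideal boundary $\partial G_A$. Vertical geodesics $\gamma_x(t)=(x,t)$ are asymptotic as $t\to+\infty$, defining $\xi_0\in\partial G_A$; $\partial G_A\setminus\{\xi_0\}$ is identified with $\mathbb{R}^n$, $x$ corresponding to the endpoint of $\gamma_x$ as $t\to-\infty$. For $p\ne q\in\mathbb{R}^n$, $D_e(p,q)=e^t$ where $t$ is the unique real number with $|e^{-tA}(p-q)|=1$ ($|\cdot|$ Euclidean). *)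

(* Defs.v *)
From Stdlib Require Import Reals List Lra.
From Coquelicot Require Import Coquelicot.
Open Scope R_scope.

Fixpoint sumk (n : nat) (f : nat -> R) : R :=
  match n with
  | O => 0
  | S m => sumk m f + f m
  end.

(* Block data: ns = [n_1; ...; n_r], als = [alpha_1; ...; alpha_r]. *)
Definition dimn (ns : list nat) : nat := fold_right Nat.add 0%nat ns.

(* Diagonal entry of A = diag(alpha_1 I_{n_1}, ..., alpha_r I_{n_r})
   in coordinate k (0-based). *)
Fixpoint wt (ns : list nat) (als : list R) (k : nat) : R :=
  match ns, als with
  | n0 :: ns', a :: als' => if Nat.ltb k n0 then a else wt ns' als' (k - n0)
  | _, _ => 0
  end.

Fixpoint strictly_increasing (l : list R) : Prop :=
  match l with
  | a :: ((b :: _) as l') => a < b /\ strictly_increasing l'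
  | _ => True
  end.

Definition valid_data (ns : list nat) (als : list R) : Prop :=
  (1 <= length ns)%nat /\ length ns = length als /\
  List.Forall (fun m => (1 <= m)%nat) ns /\
  List.Forall (fun a => 0 < a) als /\ strictly_increasing als.

(* Points of R^n are functions nat -> R, only coordinates k < n matter. *)
Definition ptR := nat -> R.

Definition normA (ns : list nat) (als : list R) (t : R) (v : ptR) : R :=
  sqrt (sumk (dimn ns) (fun k => (exp (- t * wt ns als k) * v k) ^ 2)).

(* D_e(p,q) = e^{t0}  iff  |e^{-t0 A}(p-q)| = 1 *)
Definition De_is (ns : list nat) (als : list R) (p q : ptR) (t0 : R) : Prop :=
  normA ns als t0 (fun k => p k - q k) = 1.

(* A C^1 real function (defined on all of R; every C^1 curve on [0,1]
   extends to such a function). *)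
Definition C1 (f : R -> R) : Prop :=
  forall s, ex_derive f s /\ continuous (Derive f) s.

(* A C^1 curve s |-> (x s, tt s) in G_A = R^n x R, parameter s in [0,1]. *)
Definition C1_curve (n : nat) (x : nat -> R -> R) (tt : R -> R) : Prop :=
  (forall k, (k < n)%nat -> C1 (x k)) /\ C1 tt.

(* Riemannian length for the metric diag(e^{-2tA}, 1) at (x,t). *)
Definition curve_length (ns : list nat) (als : list R)
    (x : nat -> R -> R) (tt : R -> R) : R :=
  RInt (fun s => sqrt (sumk (dimn ns)
           (fun k => (exp (- tt s * wt ns als k) * Derive (x k) s) ^ 2)
         + (Derive tt s) ^ 2)) 0 1.

Definition dist_GA (ns : list nat) (als : list R)
    (p : ptR) (t1 : R) (q : ptR) (t2 : R) : R :=
  real (Glb_Rbar (fun L => exists (x : nat -> R -> R) (tt : R -> R),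
     C1_curve (dimn ns) x tt /\
     (forall k, (k < dimn ns)%nat -> x k 0 = p k /\ x k 1 = q k) /\
     tt 0 = t1 /\ tt 1 = t2 /\
     L = curve_length ns als x tt)).

(* Main.v *)
Require Import Defs.
From Stdlib Require Import Reals List Lra Psatz Classical.
From Coquelicot Require Import Coquelicot.
Open Scope R_scope.

Lemma RInt_deriv (g : R -> R) (a x : R) :
  (forall s, continuous g s) -> is_derive (fun y => RInt g a y) x (g x).
Proof.
  intros Hg. apply is_derive_RInt with (a := a).
  - apply filter_forall. intros y. apply RInt_correct.
    apply ex_RInt_continuous. intros; apply Hg.
  - apply Hg.
Qed.

Lemma key_le (g F f : R -> R) (a b : R) : a <= b ->
  (forall s, continuous g s) ->
  (forall s, a <= s <= b -> is_derive F s (f s)) ->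
  (forall s, a <= s <= b -> f s <= g s) ->
  F b - F a <= RInt g a b.
Proof.
  intros Hab Hg HF Hfg.
  set (H := fun s => RInt g a s - F s).
  assert (HD : forall s, a <= s <= b -> is_derive H s (g s - f s)).
  { intros s Hs. unfold H. apply (is_derive_minus (fun y => RInt g a y) F).
    apply RInt_deriv; auto. auto. }
  destruct (MVT_gen H a b (fun s => g s - f s)) as [c [Hc Heq]].
  - intros x Hx. rewrite Rmin_left in Hx by lra. rewrite Rmax_right in Hx by lra.
    apply HD; lra.
  - intros x Hx. rewrite Rmin_left in Hx by lra. rewrite Rmax_right in Hx by lra.
    apply continuity_pt_filterlim. apply (ex_derive_continuous (V:=R_NormedModule)). eexists. apply HD; lra.
  - rewrite Rmin_left in Hc by lra. rewrite Rmax_right in Hc by lra.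
    unfold H in Heq. rewrite RInt_point in Heq.
    assert (0 <= (g c - f c) * (b - a)). { apply Rmult_le_pos. specialize (Hfg c Hc). lra. lra. }
    unfold zero in Heq; simpl in Heq. lra.
Qed.

Lemma key_ge (g F f : R -> R) (a b : R) : a <= b ->
  (forall s, continuous g s) ->
  (forall s, a <= s <= b -> is_derive F s (f s)) ->
  (forall s, a <= s <= b -> g s <= f s) ->
  RInt g a b <= F b - F a.
Proof.
  intros Hab Hg HF Hfg.
  set (H := fun s => F s - RInt g a s).
  assert (HD : forall s, a <= s <= b -> is_derive H s (f s - g s)).
  { intros s Hs. unfold H. apply (is_derive_minus F (fun y => RInt g a y)).
    auto. apply RInt_deriv; auto. }
  destruct (MVT_gen H a b (fun s => f s - g s)) as [c [Hc Heq]].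
  - intros x Hx. rewrite Rmin_left in Hx by lra. rewrite Rmax_right in Hx by lra.
    apply HD; lra.
  - intros x Hx. rewrite Rmin_left in Hx by lra. rewrite Rmax_right in Hx by lra.
    apply continuity_pt_filterlim. apply (ex_derive_continuous (V:=R_NormedModule)). eexists. apply HD; lra.
  - rewrite Rmin_left in Hc by lra. rewrite Rmax_right in Hc by lra.
    unfold H in Heq. rewrite RInt_point in Heq.
    assert (0 <= (f c - g c) * (b - a)). { apply Rmult_le_pos. specialize (Hfg c Hc). lra. lra. }
    unfold zero in Heq; simpl in Heq. lra.
Qed.

Lemma glb_bounds (P : R -> Prop) (B L0 : R) :
  P L0 -> (forall L, P L -> B <= L) ->
  B <= real (Glb_Rbar P) <= L0.
Proof.
  intros HL HB. destruct (Glb_Rbar_correct P) as [Hlb Hgr].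
  assert (H1 : Rbar_le (Glb_Rbar P) (Finite L0)) by (apply Hlb; auto).
  assert (H2 : Rbar_le (Finite B) (Glb_Rbar P)).
  { apply Hgr. intros x Hx. simpl. apply HB; auto. }
  destruct (Glb_Rbar P); simpl in *; try contradiction; lra.
Qed.

Lemma sumk_ext n f g : (forall k, (k < n)%nat -> f k = g k) -> sumk n f = sumk n g.
Proof. induction n; simpl; intros H; auto. rewrite IHn by (intros; apply H; lia). rewrite H by lia. auto. Qed.

Lemma sumk_nonneg n f : (forall k, (k < n)%nat -> 0 <= f k) -> 0 <= sumk n f.
Proof. induction n; simpl; intros H. lra. assert (0 <= f n) by (apply H; lia). assert (0 <= sumk n f) by (apply IHn; intros; apply H; lia). lra. Qed.

Lemma sumk_le n f g : (forall k, (k < n)%nat -> f k <= g k) -> sumk n f <= sumk n g.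
Proof. induction n; simpl; intros H. lra. assert (f n <= g n) by (apply H; lia). assert (sumk n f <= sumk n g) by (apply IHn; intros; apply H; lia). lra. Qed.

Lemma sumk_scal n c f : sumk n (fun k => c * f k) = c * sumk n f.
Proof. induction n; simpl. ring. rewrite IHn. ring. Qed.

Lemma sumk_minus n f g : sumk n (fun k => f k - g k) = sumk n f - sumk n g.
Proof. induction n; simpl. ring. rewrite IHn. ring. Qed.

Lemma is_derive_sumk n (f : nat -> R -> R) df s :
  (forall k, (k < n)%nat -> is_derive (f k) s (df k)) ->
  is_derive (fun y => sumk n (fun k => f k y)) s (sumk n df).
Proof.
  induction n; simpl; intros H.
  - apply (is_derive_const 0).
  - apply (is_derive_plus (fun y => sumk n (fun k => f k y)) (f n)).
    apply IHn; intros; apply H; lia. apply H; lia.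
Qed.

Lemma continuous_sumk n (f : nat -> R -> R) s :
  (forall k, (k < n)%nat -> continuous (f k) s) ->
  continuous (fun y => sumk n (fun k => f k y)) s.
Proof.
  induction n; simpl; intros H.
  - apply continuous_const.
  - apply (continuous_plus (fun y => sumk n (fun k => f k y)) (f n)).
    apply IHn; intros; apply H; lia. apply H; lia.
Qed.

Lemma CS_step S A B a b : 0 <= A -> 0 <= B -> S^2 <= A * B ->
  (S + a * b)^2 <= (A + a^2) * (B + b^2).
Proof.
  intros HA HB HS.
  assert (HsA := sqrt_sqrt A HA). assert (HsB := sqrt_sqrt B HB).
  assert (0 <= sqrt A) by apply sqrt_pos. assert (0 <= sqrt B) by apply sqrt_pos.
  assert (Rabs S <= sqrt A * sqrt B).
  { assert (Rabs S ^2 = S^2) by (apply pow2_abs).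
    destruct (Rle_or_lt (Rabs S) (sqrt A * sqrt B)); auto.
    assert (0 <= sqrt A * sqrt B) by nra. nra. }
  assert (2 * S * (a*b) <= A * b^2 + a^2 * B).
  { assert (Hq : 2 * S * (a*b) <= 2 * (sqrt A * sqrt B) * Rabs (a*b)).
    { assert (S * (a*b) <= Rabs S * Rabs (a * b)) by (rewrite <- Rabs_mult; apply Rle_abs).
      assert (0 <= Rabs (a*b)) by apply Rabs_pos. nra. }
    rewrite Rabs_mult in Hq.
    assert (0 <= (sqrt A * Rabs b - sqrt B * Rabs a)^2) by apply pow2_ge_0.
    assert (Rabs a ^2 = a^2) by (apply pow2_abs).
    assert (Rabs b ^2 = b^2) by (apply pow2_abs).
    nra. }
  nra.
Qed.

Lemma CS n a b : (sumk n (fun k => a k * b k))^2 <= sumk n (fun k => a k ^2) * sumk n (fun k => b k ^2).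
Proof.
  induction n; simpl. lra.
  apply CS_step; auto.
  apply sumk_nonneg; intros; apply pow2_ge_0.
  apply sumk_nonneg; intros; apply pow2_ge_0.
Qed.

Lemma wt_in ns als k : length ns = length als -> (k < dimn ns)%nat -> In (wt ns als k) als.
Proof.
  revert als k. induction ns as [|n0 ns IH]; intros als k Hl Hk; simpl in *. lia.
  destruct als as [|a als]; simpl in *. lia.
  destruct (Nat.ltb k n0) eqn:E. left; auto.
  right. apply IH. lia. apply Nat.ltb_ge in E. lia.
Qed.

Lemma si_hd l x : strictly_increasing l -> In x l -> hd 0 l <= x.
Proof.
  induction l as [|a l IH]; simpl; intros Hs Hx. contradiction.
  destruct Hx as [-> | Hx]. lra.
  destruct l as [|b l]. contradiction.
  destruct Hs as [Hab Hs]. specialize (IH Hs Hx). simpl in IH. lra.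
Qed.

Lemma wt_bounds ns als : valid_data ns als -> forall k, (k < dimn ns)%nat ->
  hd 0 als <= wt ns als k /\ 0 < wt ns als k.
Proof.
  intros [H1 [H2 [H3 [H4 H5]]]] k Hk.
  assert (Hi := wt_in ns als k H2 Hk). split.
  apply si_hd; auto.
  rewrite Forall_forall in H4. apply H4; auto.
Qed.

Lemma hd_pos ns als : valid_data ns als -> 0 < hd 0 als.
Proof.
  intros [H1 [H2 [H3 [H4 H5]]]]. destruct als as [|a als]; simpl in *.
  destruct ns; simpl in *; lia. inversion H4; auto.
Qed.

Definition bf (u : R) : R := 3 * (u * (1 - u) + Rabs (u * (1 - u))).
Definition Sb (u : R) : R := RInt bf 0 u.

Lemma bf_cont u : continuous bf u.
Proof.
  unfold bf.
  apply (continuous_scal_r 3 (fun u => u * (1 - u) + Rabs (u * (1 - u)))).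
  apply (continuous_plus (fun u => u * (1-u)) (fun u => Rabs (u * (1-u)))).
  - apply (continuous_mult (fun u => u) (fun u => 1 - u)). apply continuous_id.
    apply (continuous_minus (fun _ => 1) (fun u => u)). apply continuous_const. apply continuous_id.
  - apply continuous_Rabs_comp.
    apply (continuous_mult (fun u => u) (fun u => 1 - u)). apply continuous_id.
    apply (continuous_minus (fun _ => 1) (fun u => u)). apply continuous_const. apply continuous_id.
Qed.

Lemma bf_nonneg u : 0 <= bf u.
Proof. unfold bf. assert (H := Rle_abs (- (u * (1-u)))). rewrite Rabs_Ropp in H. lra. Qed.

Lemma bf_zero u : u <= 0 \/ 1 <= u -> bf u = 0.
Proof.
  intros H. unfold bf. assert (u * (1 - u) <= 0) by (destruct H; nra).
  rewrite Rabs_left1 by auto. ring.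
Qed.

Lemma bf_mid u : 0 <= u <= 1 -> bf u = 6 * u - 6 * u^2.
Proof. intros H. unfold bf. rewrite Rabs_pos_eq by nra. ring. Qed.

Lemma Sb_deriv u : is_derive Sb u (bf u).
Proof. apply RInt_deriv. apply bf_cont. Qed.

Lemma RInt_bf_zero a b : a <= b -> (b <= 0 \/ 1 <= a) -> RInt bf a b = 0.
Proof.
  intros Hab H.
  assert (H1 := key_le bf (fun _ => 0) (fun _ => 0) a b Hab bf_cont).
  assert (H2 := key_ge bf (fun _ => 0) (fun _ => 0) a b Hab bf_cont).
  assert (D : forall s, a <= s <= b -> is_derive (fun _ : R => 0) s ((fun _ : R => 0) s)).
  { intros; apply (is_derive_const 0). }
  assert (E : forall s, a <= s <= b -> bf s = 0) by (intros; apply bf_zero; lra).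
  specialize (H1 D). specialize (H2 D).
  assert (RInt bf a b <= 0). { assert (H3 := H2 (fun s Hs => Req_le _ _ (E s Hs))). lra. }
  assert (0 <= RInt bf a b). { assert (H4 := H1 (fun s Hs => Req_le _ _ (eq_sym (E s Hs)))). lra. }
  lra.
Qed.

Lemma Sb_le0 u : u <= 0 -> Sb u = 0.
Proof.
  intros H. unfold Sb. rewrite <- opp_RInt_swap.
  rewrite RInt_bf_zero by lra. unfold opp; simpl; ring.
  apply ex_RInt_continuous; intros; apply bf_cont.
Qed.

Lemma Sb_1 : Sb 1 = 1.
Proof.
  unfold Sb.
  assert (D : forall s, 0 <= s <= 1 -> is_derive (fun u => 3*u^2 - 2*u^3) s (bf s)).
  { intros s Hs. rewrite bf_mid by auto. auto_derive. auto. ring. }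
  assert (H1 := key_le bf _ _ 0 1 ltac:(lra) bf_cont D (fun s Hs => Req_le _ _ eq_refl)).
  assert (H2 := key_ge bf _ _ 0 1 ltac:(lra) bf_cont D (fun s Hs => Req_le _ _ eq_refl)).
  lra.
Qed.

Lemma Sb_ge1 u : 1 <= u -> Sb u = 1.
Proof.
  intros H. unfold Sb. rewrite <- (RInt_Chasles bf 0 1 u).
  rewrite (RInt_bf_zero 1 u) by lra. fold (Sb 1). rewrite Sb_1. unfold plus; simpl; ring.
  apply ex_RInt_continuous; intros; apply bf_cont.
  apply ex_RInt_continuous; intros; apply bf_cont.
Qed.

Definition integrand ns als (x : nat -> R -> R) (tt : R -> R) (s : R) : R :=
  sqrt (sumk (dimn ns)
           (fun k => (exp (- tt s * wt ns als k) * Derive (x k) s) ^ 2)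
         + (Derive tt s) ^ 2).

Lemma curve_length_eq ns als x tt : curve_length ns als x tt = RInt (integrand ns als x tt) 0 1.
Proof. reflexivity. Qed.

Lemma cont_sq (f : R -> R) s : continuous f s -> continuous (fun y => f y ^ 2) s.
Proof.
  intros H. apply (continuous_ext (fun y => f y * f y)). intros y; change (f y * f y = f y ^ 2); ring.
  apply (continuous_mult f f); auto.
Qed.

Lemma integrand_cont ns als x tt : C1_curve (dimn ns) x tt -> forall s, continuous (integrand ns als x tt) s.
Proof.
  intros [Hx Ht] s. unfold integrand.
  apply continuous_sqrt_comp.
  apply (continuous_plus (fun s => sumk (dimn ns) (fun k => (exp (- tt s * wt ns als k) * Derive (x k) s) ^ 2)) (fun s => Derive tt s ^ 2)).
  - apply (continuous_sumk _ (fun k s => (exp (- tt s * wt ns als k) * Derive (x k) s) ^ 2)).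
    intros k Hk. apply (cont_sq (fun s => exp (- tt s * wt ns als k) * Derive (x k) s)).
    apply (continuous_mult (fun s => exp (- tt s * wt ns als k)) (fun s => Derive (x k) s)).
    + apply continuous_exp_comp.
      apply (continuous_ext (fun s => (-1 * wt ns als k) * tt s)). intros y; change ((-1 * wt ns als k) * tt y = - tt y * wt ns als k); ring.
      apply (continuous_scal_r (-1 * wt ns als k) tt).
      apply (ex_derive_continuous (V:=R_NormedModule)). apply Ht.
    + apply (Hx k Hk).
  - apply cont_sq. apply Ht.
Qed.

Lemma sqrt_sub_add a b : 0 <= a -> 0 <= b -> sqrt (a + b) <= sqrt a + sqrt b.
Proof.
  intros Ha Hb. assert (0 <= sqrt a) by apply sqrt_pos. assert (0 <= sqrt b) by apply sqrt_pos.
  rewrite <- (sqrt_pow2 (sqrt a + sqrt b)) by lra.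
  apply sqrt_le_1_alt.
  assert (sqrt a * sqrt a = a) by (apply sqrt_sqrt; auto).
  assert (sqrt b * sqrt b = b) by (apply sqrt_sqrt; auto). nra.
Qed.

Definition bmp (c s : R) : R := Sb (3 * s - c).

Lemma bmp_deriv c s : is_derive (bmp c) s (3 * bf (3 * s - c)).
Proof.
  unfold bmp.
  assert (H := is_derive_comp Sb (fun s => 3 * s - c) s (bf (3 * s - c)) 3 (Sb_deriv _)).
  assert (H' : is_derive (fun s => 3 * s - c) s 3).
  { auto_derive. auto. ring. }
  specialize (H H'). unfold scal in H; simpl in H. unfold mult in H; simpl in H. auto.
Qed.

Lemma bf3_cont c s : continuous (fun s => 3 * bf (3 * s - c)) s.
Proof.
  apply (continuous_scal_r 3 (fun s => bf (3 * s - c))).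
  apply (continuous_comp (fun s => 3 * s - c) bf).
  apply (continuous_minus (fun s => 3 * s) (fun _ => c)).
  apply (continuous_mult (fun _ => 3) (fun s => s)). apply continuous_const. apply continuous_id. apply continuous_const.
  apply bf_cont.
Qed.

Lemma is_derive_eq (f : R -> R) s l l' : is_derive f s l -> l = l' -> is_derive f s l'.
Proof. intros H ->; auto. Qed.

Lemma bmp_0 c : 0 <= c -> bmp c 0 = 0.
Proof. intros; unfold bmp; apply Sb_le0; lra. Qed.
Lemma bmp_1 c : c <= 2 -> bmp c 1 = 1.
Proof. intros; unfold bmp; apply Sb_ge1; lra. Qed.

Section Up.
Variables (ns : list nat) (als : list R) (p q : ptR) (t1 t2 M : R).

Definition xc (k : nat) (s : R) : R := p k + (q k - p k) * bmp 1 s.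
Definition tc (s : R) : R := t1 + (M - t1) * bmp 0 s - (M - t2) * bmp 2 s.
Definition dtc (s : R) : R := (M - t1) * (3 * bf (3 * s - 0)) - (M - t2) * (3 * bf (3 * s - 2)).

Lemma xc_deriv k s : is_derive (xc k) s ((q k - p k) * (3 * bf (3 * s - 1))).
Proof.
  unfold xc. eapply is_derive_eq.
  apply (is_derive_plus (fun _ => p k) (fun s => (q k - p k) * bmp 1 s)).
  apply is_derive_const. apply is_derive_scal. apply bmp_deriv.
  unfold plus, zero; simpl. ring.
Qed.

Lemma tc_deriv s : is_derive tc s (dtc s).
Proof.
  unfold tc, dtc. eapply is_derive_eq.
  apply (is_derive_minus (fun s => t1 + (M - t1) * bmp 0 s) (fun s => (M - t2) * bmp 2 s)).
  apply (is_derive_plus (fun _ => t1) (fun s => (M - t1) * bmp 0 s)).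
  apply is_derive_const. apply is_derive_scal. apply bmp_deriv.
  apply is_derive_scal. apply bmp_deriv.
  unfold minus, plus, opp, zero; simpl. ring.
Qed.

Lemma up_C1 : C1_curve (dimn ns) xc tc.
Proof.
  split.
  - intros k Hk s. split. eexists; apply xc_deriv.
    apply (continuous_ext (fun s => (q k - p k) * (3 * bf (3 * s - 1)))).
    intros y; symmetry; apply is_derive_unique, xc_deriv.
    apply (continuous_mult (fun _ => q k - p k) (fun s => 3 * bf (3 * s - 1))).
    apply continuous_const. apply bf3_cont.
  - intros s. split. eexists; apply tc_deriv.
    apply (continuous_ext dtc).
    intros y; symmetry; apply is_derive_unique, tc_deriv.
    unfold dtc.
    apply (continuous_minus (fun s => (M - t1) * (3 * bf (3 * s - 0))) (fun s => (M - t2) * (3 * bf (3 * s - 2)))).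
    apply (continuous_mult (fun _ => M - t1) (fun s => 3 * bf (3 * s - 0))).
    apply continuous_const. apply bf3_cont.
    apply (continuous_mult (fun _ => M - t2) (fun s => 3 * bf (3 * s - 2))).
    apply continuous_const. apply bf3_cont.
Qed.

Lemma up_length : normA ns als M (fun k => p k - q k) <= 1 -> t1 <= M -> t2 <= M ->
  curve_length ns als xc tc <= (M - t1) + (M - t2) + 1.
Proof.
  intros HN H1 H2. rewrite curve_length_eq.
  set (F := fun s => (M - t1) * bmp 0 s + bmp 1 s + (M - t2) * bmp 2 s).
  set (f := fun s => (M - t1) * (3 * bf (3 * s - 0)) + 3 * bf (3 * s - 1) + (M - t2) * (3 * bf (3 * s - 2))).
  assert (HF : F 1 - F 0 = (M - t1) + (M - t2) + 1).
  { unfold F. rewrite !bmp_0, !bmp_1 by lra. ring. }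
  rewrite <- HF.
  apply (key_ge _ F f 0 1). lra. apply integrand_cont, up_C1.
  - intros s _. unfold F, f. eapply is_derive_eq.
    apply (is_derive_plus (fun s => (M - t1) * bmp 0 s + bmp 1 s) (fun s => (M - t2) * bmp 2 s)).
    apply (is_derive_plus (fun s => (M - t1) * bmp 0 s) (bmp 1)).
    apply is_derive_scal, bmp_deriv. apply bmp_deriv. apply is_derive_scal, bmp_deriv.
    unfold plus; simpl. ring.
  - intros s Hs. unfold integrand.
    rewrite (is_derive_unique _ _ _ (tc_deriv s)).
    set (B := 3 * bf (3 * s - 1)).
    assert (HB : 0 <= B) by (unfold B; assert (H := bf_nonneg (3*s-1)); lra).
    rewrite (sumk_ext _ _ (fun k => B^2 * (exp (- tc s * wt ns als k) * (p k - q k)) ^ 2)).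
    2:{ intros k Hk. rewrite (is_derive_unique _ _ _ (xc_deriv k s)). fold B. ring. }
    rewrite sumk_scal.
    set (X := sumk (dimn ns) (fun k => (exp (- tc s * wt ns als k) * (p k - q k)) ^ 2)).
    assert (HX : 0 <= X) by (apply sumk_nonneg; intros; apply pow2_ge_0).
    eapply Rle_trans. apply sqrt_sub_add. apply Rmult_le_pos; auto. apply pow2_ge_0. apply pow2_ge_0.
    rewrite sqrt_mult, sqrt_pow2 by (auto; apply pow2_ge_0).
    assert (HBX : B * sqrt X <= B).
    { destruct (Rle_or_lt (3 * s - 1) 0) as [Ha|Ha].
      - unfold B; rewrite bf_zero by lra. lra.
      destruct (Rle_or_lt 1 (3 * s - 1)) as [Hb|Hb].
      - unfold B; rewrite bf_zero by lra. lra.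
      - assert (Htc : tc s = M).
        { unfold tc, bmp. rewrite (Sb_ge1 (3 * s - 0)) by lra. rewrite (Sb_le0 (3 * s - 2)) by lra. ring. }
        unfold X. rewrite Htc. unfold normA in HN. rewrite <- (Rmult_1_r B) at 2; apply Rmult_le_compat_l; auto. }
    assert (Hd : sqrt (dtc s ^ 2) <= (M - t1) * (3 * bf (3 * s - 0)) + (M - t2) * (3 * bf (3 * s - 2))).
    { rewrite <- sqrt_Rsqr_abs_pow2 || idtac.
      assert (E1 := bf_nonneg (3 * s - 0)). assert (E2 := bf_nonneg (3 * s - 2)).
      unfold dtc. apply Rsqr_incr_0_var. 2: nra.
      rewrite Rsqr_sqrt by apply pow2_ge_0. unfold Rsqr.
      assert (0 <= ((M-t1)*(3*bf (3 * s - 0)))*((M-t2)*(3*bf (3 * s - 2)))) by (apply Rmult_le_pos; nra). nra. }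
    unfold f. fold B. lra.
Qed.
End Up.

Lemma sqrt_gt_abs u : Rabs u < sqrt (1 + u^2).
Proof.
  rewrite <- (sqrt_pow2 (Rabs u)) by apply Rabs_pos.
  apply sqrt_lt_1_alt. split. apply pow2_ge_0. rewrite <- RPow_abs || idtac.
  rewrite pow2_abs. lra.
Qed.

Lemma asinh_pos u : 0 < u + sqrt (1 + u^2).
Proof. assert (H := sqrt_gt_abs u). assert (H2 := Rle_abs (-u)). rewrite Rabs_Ropp in H2. lra. Qed.

Lemma asinh_deriv (tt sg : R -> R) a t0 m s dt ds :
  is_derive tt s dt -> is_derive sg s ds -> 0 < a ->
  is_derive (fun s => ln (a * exp (a * (t0 - tt s)) * (sg s - m) + sqrt (1 + (a * exp (a * (t0 - tt s)) * (sg s - m))^2)) / a) s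
    ((exp (a * (t0 - tt s)) * ds - (a * exp (a * (t0 - tt s)) * (sg s - m)) * dt) / sqrt (1 + (a * exp (a * (t0 - tt s)) * (sg s - m))^2)).
Proof.
  intros Ht Hs Ha.
  set (u := a * exp (a * (t0 - tt s)) * (sg s - m)).
  assert (Hp := asinh_pos u).
  assert (HQ : 0 < sqrt (1 + u^2)). { apply sqrt_lt_R0. assert (0 <= u^2) by apply pow2_ge_0. lra. }
  auto_derive.
  - repeat split; try (eexists; eauto; fail).
    + assert (HX : forall X, 0 < 1 + X*(X*1)) by (intros; nra). apply HX.
    + unfold u in Hp. simpl in Hp. replace (t0 + - tt s) with (t0 - tt s) by ring.
      replace (sg s + - m) with (sg s - m) by ring. exact Hp.
  - assert (Et : Derive (fun x : R => tt x) s = dt) by (apply is_derive_unique; auto).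
    assert (Es : Derive (fun x : R => sg x) s = ds) by (apply is_derive_unique; auto).
    rewrite Et, Es.
    replace (t0 + - tt s) with (t0 - tt s) by ring.
    replace (sg s + - m) with (sg s - m) by ring.
    fold u. replace (1 + u * (u * 1)) with (1 + u^2) by ring.
    assert (Hu2 : u = a * exp (a * (t0 - tt s)) * (sg s - m)) by reflexivity. clearbody u. change R in dt, ds. change RinvImpl.Rinv with Rinv. revert HQ Hp. generalize (sqrt (1 + u^2)). intros Q HQ Hp. rewrite Hu2 in *. field; try split; lra.
Qed.

Lemma le_sq_sqrt c X : 0 <= X -> c^2 <= X -> c <= sqrt X.
Proof.
  intros HX H. destruct (Rle_or_lt c 0). assert (0 <= sqrt X) by apply sqrt_pos. lra.
  rewrite <- (sqrt_pow2 c) by lra. apply sqrt_le_1_alt. auto.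
Qed.

Lemma calib_pt n (w v xp : nat -> R) a t0 t dt u :
  0 < a -> (forall k, (k < n)%nat -> a <= w k) -> t <= t0 ->
  sumk n (fun k => (exp (- t0 * w k) * v k) ^ 2) = 1 ->
  (exp (a * (t0 - t)) * sumk n (fun k => (exp (- t0 * w k) ^ 2 * v k) * xp k) - u * dt) / sqrt (1 + u ^ 2)
   <= sqrt (sumk n (fun k => (exp (- t * w k) * xp k) ^ 2) + dt ^ 2).
Proof.
  intros Ha Hw Ht Hv.
  set (E := exp (a * (t0 - t))).
  set (ds := sumk n (fun k => (exp (- t0 * w k) ^ 2 * v k) * xp k)).
  set (h2 := sumk n (fun k => (exp (- t * w k) * xp k) ^ 2)).
  assert (Hh2 : 0 <= h2) by (apply sumk_nonneg; intros; apply pow2_ge_0).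
  set (A := sumk n (fun k => (exp (- t0 * w k) ^ 2 * v k * exp (t * w k)) ^ 2)).
  assert (HA : 0 <= A) by (apply sumk_nonneg; intros; apply pow2_ge_0).
  assert (Hds : ds ^ 2 <= A * h2).
  { unfold ds, A, h2.
    rewrite (sumk_ext n _ (fun k => (exp (- t0 * w k) ^ 2 * v k * exp (t * w k)) * (exp (- t * w k) * xp k))).
    apply CS.
    intros k Hk. replace (- t * w k) with (- (t * w k)) by ring. rewrite exp_Ropp.
    field. apply Rgt_not_eq, exp_pos. }
  assert (HEA : E ^ 2 * A <= 1).
  { unfold A. rewrite <- sumk_scal. rewrite <- Hv. apply sumk_le. intros k Hk.
    set (Y := exp (- t0 * w k) * v k).
    set (br := exp ((w k - a) * (t - t0))).
    assert (Hbr : exp (a * (t0 - t)) * exp (- t0 * w k) * exp (t * w k) = br).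
    { unfold br. rewrite <- !exp_plus. f_equal. ring. }
    assert (Hbr1 : 0 < br <= 1).
    { unfold br. split. apply exp_pos. rewrite <- exp_0. apply exp_le_3 || idtac.
      destruct (Req_dec ((w k - a) * (t - t0)) 0) as [Z|Z]. rewrite Z; lra.
      left. apply exp_increasing. assert (a <= w k) by (apply Hw; auto). nra. }
    replace (E ^ 2 * (exp (- t0 * w k) ^ 2 * v k * exp (t * w k)) ^ 2) with ((br * Y) ^ 2).
    2:{ rewrite <- Hbr. unfold Y, E. ring. }
    assert (0 <= Y^2) by apply pow2_ge_0. rewrite Rpow_mult_distr. assert (br^2 <= 1) by nra. nra. }
  assert (Hc : (E * ds) ^ 2 <= h2).
  { assert (0 <= E^2) by apply pow2_ge_0.
    replace ((E * ds)^2) with (E^2 * ds^2) by ring.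
    apply Rle_trans with (E^2 * (A * h2)). apply Rmult_le_compat_l; auto.
    replace (E^2 * (A * h2)) with ((E^2 * A) * h2) by ring. nra. }
  assert (HQ : 0 < sqrt (1 + u ^ 2)). { apply sqrt_lt_R0. assert (0 <= u^2) by apply pow2_ge_0. lra. }
  apply (Rmult_le_reg_r (sqrt (1 + u ^ 2))); auto.
  replace ((E * ds - u * dt) / sqrt (1 + u ^ 2) * sqrt (1 + u ^ 2)) with (E * ds - u * dt) by (field; lra).
  rewrite <- sqrt_mult.
  2: { assert (0 <= dt^2) by apply pow2_ge_0. lra. }
  2: { assert (0 <= u^2) by apply pow2_ge_0. lra. }
  apply le_sq_sqrt.
  { apply Rmult_le_pos. assert (0 <= dt^2) by apply pow2_ge_0. lra. assert (0 <= u^2) by apply pow2_ge_0. lra. }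
  assert (0 <= (E * ds * u + dt)^2) by apply pow2_ge_0.
  assert (0 <= u^2) by apply pow2_ge_0.
  apply Rle_trans with (((E * ds)^2 + dt^2) * (1 + u^2)). nra.
  apply Rmult_le_compat_r. lra. lra.
Qed.

Definition Lsh (z : R) : R := ln (z + sqrt (1 + z ^ 2)).

Lemma Lsh_odd z : Lsh (- z) = - Lsh z.
Proof.
  unfold Lsh. assert (Hp := asinh_pos z). assert (Hm := asinh_pos (-z)).
  replace ((- z)^2) with (z^2) in * by ring.
  rewrite <- ln_Rinv by auto. f_equal.
  assert (Hs : sqrt (1 + z^2) * sqrt (1 + z^2) = 1 + z^2).
  { apply sqrt_sqrt. assert (0 <= z^2) by apply pow2_ge_0. lra. }
  field_simplify_eq. nra. lra.
Qed.

Lemma Lsh_lb z : 0 < z -> ln (2 * z) <= Lsh z.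
Proof.
  intros Hz. unfold Lsh. apply ln_le. lra.
  assert (H := sqrt_gt_abs z). rewrite Rabs_pos_eq in H by lra. lra.
Qed.

Lemma int_ge_abs ns als x tt s : Rabs (Derive tt s) <= integrand ns als x tt s.
Proof.
  unfold integrand. apply le_sq_sqrt.
  assert (0 <= sumk (dimn ns) (fun k => (exp (- tt s * wt ns als k) * Derive (x k) s) ^ 2))
    by (apply sumk_nonneg; intros; apply pow2_ge_0).
  assert (0 <= Derive tt s ^ 2) by apply pow2_ge_0. lra.
  rewrite pow2_abs.
  assert (0 <= sumk (dimn ns) (fun k => (exp (- tt s * wt ns als k) * Derive (x k) s) ^ 2))
    by (apply sumk_nonneg; intros; apply pow2_ge_0). lra.
Qed.

Section Low.
Variables (ns : list nat) (als : list R) (p q : ptR) (t0 t1 t2 : R) (x : nat -> R -> R) (tt : R -> R).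
Hypothesis HC : C1_curve (dimn ns) x tt.
Hypothesis Hend : forall k, (k < dimn ns)%nat -> x k 0 = p k /\ x k 1 = q k.
Hypothesis H0 : tt 0 = t1.
Hypothesis H1 : tt 1 = t2.

Lemma tt_der s : is_derive tt s (Derive tt s).
Proof. apply Derive_correct. apply HC. Qed.

Lemma seg_up a b : a <= b -> tt b - tt a <= RInt (integrand ns als x tt) a b.
Proof.
  intros Hab. apply (key_le _ tt (Derive tt)); auto. apply integrand_cont; auto.
  intros; apply tt_der.
  intros s _. eapply Rle_trans. apply Rle_abs. apply int_ge_abs.
Qed.

Lemma seg_down a b : a <= b -> tt a - tt b <= RInt (integrand ns als x tt) a b.
Proof.
  intros Hab. replace (tt a - tt b) with ((fun s => - tt s) b - (fun s => - tt s) a) by (simpl; ring).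
  apply (key_le _ (fun s => - tt s) (fun s => - Derive tt s)); auto. apply integrand_cont; auto.
  intros; apply (is_derive_opp tt). apply tt_der.
  intros s _. eapply Rle_trans. 2: apply int_ge_abs. rewrite <- Rabs_Ropp. apply Rle_abs.
Qed.

Lemma low_vert : Rabs (t1 - t2) <= curve_length ns als x tt.
Proof.
  rewrite curve_length_eq. assert (A1 := seg_up 0 1 ltac:(lra)). assert (A2 := seg_down 0 1 ltac:(lra)).
  unfold Rabs. destruct (Rcase_abs (t1 - t2)); lra.
Qed.

Lemma low_reach : (exists s0, 0 <= s0 <= 1 /\ t0 <= tt s0) -> (t0 - t1) + (t0 - t2) <= curve_length ns als x tt.
Proof.
  intros [s0 [Hs Ht]]. rewrite curve_length_eq.
  assert (A1 := seg_up 0 s0 ltac:(lra)). assert (A2 := seg_down s0 1 ltac:(lra)).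
  rewrite <- (RInt_Chasles _ 0 s0 1).
  unfold plus; simpl. lra.
  apply ex_RInt_continuous; intros; apply integrand_cont; auto.
  apply ex_RInt_continuous; intros; apply integrand_cont; auto.
Qed.
End Low.

Section Calib.
Variables (ns : list nat) (als : list R) (p q : ptR) (t0 t1 t2 : R) (x : nat -> R -> R) (tt : R -> R).
Hypothesis HC : C1_curve (dimn ns) x tt.
Hypothesis Hend : forall k, (k < dimn ns)%nat -> x k 0 = p k /\ x k 1 = q k.
Hypothesis H0 : tt 0 = t1.
Hypothesis H1 : tt 1 = t2.
Hypothesis Hval : valid_data ns als.
Hypothesis HDe : De_is ns als p q t0.
Hypothesis Hbelow : forall s, 0 <= s <= 1 -> tt s <= t0.

Let a := hd 0 als.
Let n := dimn ns.
Let w := wt ns als.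
Let xi k := exp (- t0 * w k) ^ 2 * (q k - p k).
Let sg s := sumk n (fun k => xi k * x k s).
Let m := (sg 0 + sg 1) / 2.
Let u s := a * exp (a * (t0 - tt s)) * (sg s - m).
Let Fc s := ln (u s + sqrt (1 + (u s) ^ 2)) / a.

Lemma a_pos : 0 < a.
Proof. apply hd_pos with ns; auto. Qed.

Lemma sum1 : sumk n (fun k => (exp (- t0 * w k) * (q k - p k)) ^ 2) = 1.
Proof.
  unfold De_is, normA in HDe.
  set (S := sumk (dimn ns) (fun k => (exp (- t0 * wt ns als k) * (p k - q k)) ^ 2)) in HDe.
  assert (HS : 0 <= S) by (apply sumk_nonneg; intros; apply pow2_ge_0).
  assert (HS1 : S = 1) by (rewrite <- (sqrt_sqrt S HS), HDe; ring).
  unfold n, w. rewrite <- HS1. unfold S. apply sumk_ext. intros; ring.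
Qed.

Lemma sg_der s : is_derive sg s (sumk n (fun k => xi k * Derive (x k) s)).
Proof.
  apply (is_derive_sumk n (fun k s => xi k * x k s)).
  intros k Hk. apply is_derive_scal. apply Derive_correct. apply HC. auto.
Qed.

Lemma sg_diff : sg 1 - sg 0 = 1.
Proof.
  unfold sg. rewrite <- sumk_minus. transitivity (sumk n (fun k => (exp (- t0 * w k) * (q k - p k)) ^ 2)). 2: apply sum1. apply sumk_ext.
  intros k Hk. cbv beta. destruct (Hend k Hk) as [E0 E1]. rewrite E0, E1. unfold xi. ring.
Qed.

Lemma low_calib : 2 * t0 - t1 - t2 + 2 * ln a / a <= curve_length ns als x tt.
Proof.
  assert (Ha := a_pos).
  rewrite curve_length_eq.
  apply Rle_trans with (Fc 1 - Fc 0).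
  - unfold Fc, u. fold (Lsh (a * exp (a * (t0 - tt 1)) * (sg 1 - m))).
    fold (Lsh (a * exp (a * (t0 - tt 0)) * (sg 0 - m))).
    assert (Hd := sg_diff).
    replace (sg 1 - m) with (1/2) by (unfold m; lra).
    replace (sg 0 - m) with (- (1/2)) by (unfold m; lra).
    replace (a * exp (a * (t0 - tt 0)) * - (1 / 2)) with (- (a * exp (a * (t0 - tt 0)) * (1/2))) by ring.
    rewrite Lsh_odd.
    assert (E1 : ln (2 * (a * exp (a * (t0 - tt 1)) * (1 / 2))) <= Lsh (a * exp (a * (t0 - tt 1)) * (1 / 2))).
    { apply Lsh_lb. assert (0 < exp (a * (t0 - tt 1))) by apply exp_pos. nra. }
    assert (E0 : ln (2 * (a * exp (a * (t0 - tt 0)) * (1 / 2))) <= Lsh (a * exp (a * (t0 - tt 0)) * (1 / 2))).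
    { apply Lsh_lb. assert (0 < exp (a * (t0 - tt 0)) ) by apply exp_pos. nra. }
    replace (2 * (a * exp (a * (t0 - tt 1)) * (1 / 2))) with (a * exp (a * (t0 - tt 1))) in E1 by field.
    replace (2 * (a * exp (a * (t0 - tt 0)) * (1 / 2))) with (a * exp (a * (t0 - tt 0))) in E0 by field.
    rewrite ln_mult, ln_exp in E1, E0 by (auto; apply exp_pos).
    rewrite H0, H1 in *.
    apply (Rmult_le_reg_r a); auto.
    replace ((2 * t0 - t1 - t2 + 2 * ln a / a) * a) with (ln a + a * (t0 - t2) + (ln a + a * (t0 - t1))) by (field; lra).
    replace ((Lsh (a * exp (a * (t0 - t2)) * (1 / 2)) / a - - Lsh (a * exp (a * (t0 - t1)) * (1 / 2)) / a) * a)
      with (Lsh (a * exp (a * (t0 - t2)) * (1 / 2)) + Lsh (a * exp (a * (t0 - t1)) * (1 / 2))) by (field; lra).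
    lra.
  - apply (key_le _ Fc (fun s => (exp (a * (t0 - tt s)) * sumk n (fun k => xi k * Derive (x k) s) - u s * Derive tt s) / sqrt (1 + u s ^ 2))).
    lra. apply integrand_cont; auto.
    + intros s _. unfold Fc, u. apply asinh_deriv; auto. apply Derive_correct; apply HC. apply sg_der.
    + intros s Hs. unfold integrand. fold n.
      apply (calib_pt n w (fun k => q k - p k) (fun k => Derive (x k) s) a t0 (tt s) (Derive tt s) (u s)); auto.
      intros k Hk. apply (wt_bounds ns als Hval k Hk).
      apply sum1.
Qed.
End Calib.

Definition Pset ns als (p : ptR) t1 (q : ptR) t2 : R -> Prop := fun L => exists (x : nat -> R -> R) (tt : R -> R),
     C1_curve (dimn ns) x tt /\
     (forall k, (k < dimn ns)%nat -> x k 0 = p k /\ x k 1 = q k) /\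
     tt 0 = t1 /\ tt 1 = t2 /\
     L = curve_length ns als x tt.

Lemma dist_eq ns als p t1 q t2 : dist_GA ns als p t1 q t2 = real (Glb_Rbar (Pset ns als p t1 q t2)).
Proof. reflexivity. Qed.

Lemma up_mem ns als p q t1 t2 M : normA ns als M (fun k => p k - q k) <= 1 -> t1 <= M -> t2 <= M ->
  exists L, Pset ns als p t1 q t2 L /\ L <= (M - t1) + (M - t2) + 1.
Proof.
  intros HN H1 H2. exists (curve_length ns als (xc p q) (tc t1 t2 M)). split.
  - exists (xc p q), (tc t1 t2 M). split. apply up_C1. split.
    + intros k Hk. unfold xc. rewrite bmp_0, bmp_1 by lra. split; ring.
    + unfold tc. rewrite !bmp_0, !bmp_1 by lra. split. ring. split. ring. auto.
  - apply up_length; auto.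
Qed.

Lemma normA_mono ns als v t0 M : valid_data ns als -> t0 <= M -> normA ns als M v <= normA ns als t0 v.
Proof.
  intros Hv HM. unfold normA. apply sqrt_le_1_alt. apply sumk_le. intros k Hk.
  destruct (wt_bounds ns als Hv k Hk) as [_ Hw].
  assert (exp (- M * wt ns als k) <= exp (- t0 * wt ns als k)).
  { destruct (Req_dec M t0) as [->|Hne]. lra. left. apply exp_increasing. nra. }
  assert (0 < exp (- M * wt ns als k)) by apply exp_pos.
  rewrite !Rpow_mult_distr. assert (0 <= v k ^ 2) by apply pow2_ge_0.
  apply Rmult_le_compat_r; auto. nra.
Qed.

Theorem lemma6p3 :
  forall a1 ar : R, exists C : R,
  forall (ns : list nat) (als : list R),
    valid_data ns als ->
    hd 0 als = a1 -> last als 0 = ar ->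
  forall (p q : ptR) (t0 t1 t2 : R),
    (exists k, (k < dimn ns)%nat /\ p k <> q k) ->
    De_is ns als p q t0 ->
    ((t1 < t0 -> t2 < t0 ->
        Rabs (dist_GA ns als p t1 q t2 - (t0 - t1) - (t0 - t2)) <= C) /\
     ((t1 >= t0 \/ t2 >= t0) ->
        Rabs (t1 - t2) <= dist_GA ns als p t1 q t2 <= Rabs (t1 - t2) + 1)).
Proof.
  intros a1 ar. exists (1 + 2 * Rabs (ln a1) / a1).
  intros ns als Hval Ha1 _ p q t0 t1 t2 _ HDe.
  assert (Ha : 0 < a1) by (rewrite <- Ha1; apply hd_pos with ns; auto).
  assert (HlnC : 0 <= 2 * Rabs (ln a1) / a1).
  { unfold Rdiv. apply Rmult_le_pos. assert (0 <= Rabs (ln a1)) by apply Rabs_pos. lra.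
    left; apply Rinv_0_lt_compat; auto. }
  assert (Hln : - (2 * Rabs (ln a1) / a1) <= 2 * ln a1 / a1).
  { unfold Rdiv. assert (Hi : 0 < / a1) by (apply Rinv_0_lt_compat; auto).
    assert (Hx : - Rabs (ln a1) <= ln a1). { assert (H := Rle_abs (- ln a1)). rewrite Rabs_Ropp in H. lra. }
    nra. }
  rewrite dist_eq. split.
  - intros H1 H2.
    assert (HN : normA ns als t0 (fun k => p k - q k) <= 1) by (unfold De_is in HDe; lra).
    destruct (up_mem ns als p q t1 t2 t0 HN ltac:(lra) ltac:(lra)) as [L0 [HP HL0]].
    assert (HB := glb_bounds (Pset ns als p t1 q t2) (2 * t0 - t1 - t2 - 2 * Rabs (ln a1) / a1) L0 HP).
    destruct HB as [HB1 HB2].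
    + intros L [x [tt [HC [Hend [E0 [E1 ->]]]]]].
      destruct (classic (exists s0, 0 <= s0 <= 1 /\ t0 <= tt s0)) as [Hr|Hr].
      * assert (H : (t0 - t1) + (t0 - t2) <= curve_length ns als x tt) by (eapply low_reach; eauto). lra.
      * assert (Hb : forall s, 0 <= s <= 1 -> tt s <= t0).
        { intros s Hs. destruct (Rle_or_lt (tt s) t0); auto. exfalso. apply Hr. exists s. split; auto; lra. }
        assert (H : 2 * t0 - t1 - t2 + 2 * ln (hd 0 als) / (hd 0 als) <= curve_length ns als x tt) by (eapply low_calib; eauto).
        rewrite Ha1 in H. lra.
    + apply Rabs_le. lra.
  - intros Ht.
    set (M := Rmax t1 t2).
    assert (HM1 : t1 <= M) by apply Rmax_l. assert (HM2 : t2 <= M) by apply Rmax_r.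
    assert (HM0 : t0 <= M) by (destruct Ht; lra).
    assert (HN : normA ns als M (fun k => p k - q k) <= 1).
    { unfold De_is in HDe. rewrite <- HDe. apply normA_mono; auto. }
    destruct (up_mem ns als p q t1 t2 M HN HM1 HM2) as [L0 [HP HL0]].
    assert (HB := glb_bounds (Pset ns als p t1 q t2) (Rabs (t1 - t2)) L0 HP).
    destruct HB as [HB1 HB2].
    + intros L [x [tt [HC [Hend [E0 [E1 ->]]]]]].
      apply low_vert; auto.
    + assert (HMabs : (M - t1) + (M - t2) = Rabs (t1 - t2)).
      { unfold M, Rmax, Rabs. destruct (Rle_dec t1 t2); destruct (Rcase_abs (t1 - t2)); lra. }
      lra.
Qed.
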